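(* Let $\varphi$ be a basic existential or basic universal sentence of spread $m$ and range $r'$ over a graph language $L$, and let $C,M\notin L$ be distinct unary predicate symbols. Let $G$ be an $L$-interpretation and $\lambda$ a layering of $\overline G$. Let $r\ge r'$ and $\ell>4r$ be integers, let $R$ be an $(\ell,r)$-cover of integers, and let $p$ be an $m$-plan for $R$. Suppose that for each $I\in R$, $$G[\lambda^{-1}(I)],\ C:=\lambda^{-1}(M_{2r}(I)),\ M:=\lambda^{-1}(M_r(I))\models\varphi^{(p(I))}.$$ Then $G\models\varphi$.
   Context: A graph language $L$ consists of a binary predicate symbol $e$ and a finite set of unary predicate symbols. An $L$-interpretation $G$ consists of a graph $\overline G$ and a set $S_C\subseteq V(\overline G)$ for each unary $C\in L$; $e$ is interpreted as adjacency in $\overline G$. For $S\subseteq V(\overline G)$, $G[S]$ is the interpretation on $\overline G[S]$ with each unary predicate restricted to $S$; ''$H, C:=A, M:=B$'' denotes the expansion of $H$ with new unary predicates $C,M$ interpreted as $A,B$. A layering of a graph is a function $\lambda:V\to\mathbb Z$ with $|\lambda(u)-\lambda(v)|\le1$ on edges. $d(x,y)\le r$ abbreviates $(\exists z_0,\dots,z_r)\,z_0=x\land z_r=y\land\bigwedge_{i=1}^r(z_{i-1}=z_i\lor e(z_{i-1},z_i))$. An $r$-local formula is a formula $\psi$ with one free variable $x$ in which all quantifications are of the form $(\exists y: d(x,y)\le r)$ or $(\forall y: d(x,y)\le r)$. A basic existential sentence is one of the form $(\exists x_1,\dots,x_m)\bigwedge_{1\le i<j\le m}d(x_i,x_j)>2r\land\bigwedge_{i=1}^m\psi(x_i)$,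 and a basic universal sentence is one of the form $(\forall x_1,\dots,x_{m+1})\bigl(\bigwedge_{1\le i<j\le m+1}d(x_i,x_j)>2r\bigr)\Rightarrow\bigvee_{i=1}^{m+1}\psi(x_i)$, where in both cases $\psi$ is $r$-local; $m$ is the spread, $r$ the range and $\psi$ the core. For such $\varphi$ and an integer $k\ge0$, the $(C,M,k)$-variant $\varphi^{(k)}$ is $(\exists x_1,\dots,x_k)\bigwedge_{1\le i<j\le k}d(x_i,x_j)>2r\land\bigwedge_{i=1}^k(C(x_i)\land\psi(x_i))$ if $\varphi$ is basic existential, and $(\forall x_1,\dots,x_{k+1})\bigl(\bigwedge_{i=1}^{k+1}M(x_i)\land\bigwedge_{1\le i<j\le k+1}d(x_i,x_j)>2r\bigr)\Rightarrow\bigvee_{i=1}^{k+1}\psi(x_i)$ if $\varphi$ is basic universal. For integers $\ell\ge 2r+1$ and $n$, the set of all intervals $\{i,i+1,\dots,i+\ell-1\}$ with $i\equiv n\pmod{\ell-2r}$ is an $(\ell,r)$-cover of integers (there are exactly $\ell-2r$ distinct ones). For an integer $d\ge0$ and $I=\{i,\dots,i+\ell-1\}$ in a cover, $M_d(I)=\{i+d,\dots,i+\ell-d-1\}$. An $m$-plan for a cover $R$ is a function $p:R\to\mathbb Z_{\ge0}$ with $\sum_{I\in R}p(I)=m$. *)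

(* Defs.v *)
From Stdlib Require Import ZArith List Arith.
Import ListNotations.
Open Scope Z_scope.

Inductive lterm : Type := tX : lterm | tV : nat -> lterm.

(* Syntax of r-local formulas over a graph language: atoms e, =, unary predicates
   (symbols are natural numbers); all quantifications are bounded by d(x,y) <= r,
   where x is the unique free variable (the radius r is supplied at evaluation). *)
Inductive lform : Type :=
| LTrue : lform
| LFalse : lform
| LEq : lterm -> lterm -> lform
| LAdj : lterm -> lterm -> lform
| LPred : nat -> lterm -> lform
| LNot : lform -> lform
| LAnd : lform -> lform -> lform
| LOr : lform -> lform -> lform
| LImp : lform -> lform -> lform
| LExB : nat -> lform -> lform
| LAllB : nat -> lform -> lform.

Definition tclosed (bound : list nat) (t : lterm) : Prop :=
  match t with tX => True | tV n => In n bound end.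

Fixpoint lclosed_aux (bound : list nat) (f : lform) : Prop :=
  match f with
  | LTrue | LFalse => True
  | LEq a b | LAdj a b => tclosed bound a /\ tclosed bound b
  | LPred _ a => tclosed bound a
  | LNot g => lclosed_aux bound g
  | LAnd g h | LOr g h | LImp g h => lclosed_aux bound g /\ lclosed_aux bound h
  | LExB y g | LAllB y g => lclosed_aux (y :: bound) g
  end.
Definition lclosed (f : lform) : Prop := lclosed_aux [] f.

Fixpoint in_lang (L : list nat) (f : lform) : Prop :=
  match f with
  | LTrue | LFalse | LEq _ _ | LAdj _ _ => True
  | LPred c _ => In c L
  | LNot g => in_lang L g
  | LAnd g h | LOr g h | LImp g h => in_lang L g /\ in_lang L h
  | LExB _ g | LAllB _ g => in_lang L g
  end.

Section Sem.
Variable V : Type.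
Variable D : V -> Prop.
Variable adj : V -> V -> Prop.
Variable U : nat -> V -> Prop.

(* semantics of the formula d(x,y) <= r, written out: there are z_0..z_r in the domain
   with z_0 = x, z_r = y and z_{i-1} = z_i or e(z_{i-1}, z_i). *)
Definition dle (r : nat) (x y : V) : Prop :=
  exists z : nat -> V, z 0%nat = x /\ z r = y /\
    (forall i, (i <= r)%nat -> D (z i)) /\
    (forall i, (1 <= i <= r)%nat -> z (i - 1)%nat = z i \/ adj (z (i - 1)%nat) (z i)).

Definition upd (rho : nat -> V) (y : nat) (v : V) : nat -> V :=
  fun n => if Nat.eqb n y then v else rho n.

Definition tval (x : V) (rho : nat -> V) (t : lterm) : V :=
  match t with tX => x | tV n => rho n end.

Fixpoint leval (r : nat) (x : V) (rho : nat -> V) (f : lform) : Prop :=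
  match f with
  | LTrue => True
  | LFalse => False
  | LEq a b => tval x rho a = tval x rho b
  | LAdj a b => adj (tval x rho a) (tval x rho b)
  | LPred c a => U c (tval x rho a)
  | LNot g => ~ leval r x rho g
  | LAnd g h => leval r x rho g /\ leval r x rho h
  | LOr g h => leval r x rho g \/ leval r x rho h
  | LImp g h => leval r x rho g -> leval r x rho h
  | LExB y g => exists v, D v /\ dle r x v /\ leval r x (upd rho y v) g
  | LAllB y g => forall v, D v -> dle r x v -> leval r x (upd rho y v) g
  end.

(* psi(x) holds (psi closed except for x, so the environment is irrelevant) *)
Definition holds (r : nat) (psi : lform) (x : V) : Prop := leval r x (fun _ => x) psi.
End Sem.

Inductive bkind : Type := BExists | BForall.

Record basic : Type := mkBasic { bk : bkind; spread : nat; range : nat; core : lform }.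

Definition far {V} (D : V -> Prop) adj (r : nat) (xs : nat -> V) (k : nat) : Prop :=
  forall i j, (i < j < k)%nat -> ~ dle V D adj (2 * r) (xs i) (xs j).

Definition sat_basic {V} (D : V -> Prop) (adj : V -> V -> Prop) (U : nat -> V -> Prop)
    (phi : basic) : Prop :=
  let m := spread phi in let r := range phi in let psi := core phi in
  match bk phi with
  | BExists => exists xs : nat -> V, (forall i, (i < m)%nat -> D (xs i)) /\
      far D adj r xs m /\ (forall i, (i < m)%nat -> holds V D adj U r psi (xs i))
  | BForall => forall xs : nat -> V, (forall i, (i < S m)%nat -> D (xs i)) ->
      far D adj r xs (S m) -> exists i, (i < S m)%nat /\ holds V D adj U r psi (xs i)
  end.

Definition sat_variant {V} (D : V -> Prop) (adj : V -> V -> Prop) (U : nat -> V -> Prop)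
    (Csym Msym : nat) (k : nat) (phi : basic) : Prop :=
  let r := range phi in let psi := core phi in
  match bk phi with
  | BExists => exists xs : nat -> V, (forall i, (i < k)%nat -> D (xs i)) /\
      far D adj r xs k /\
      (forall i, (i < k)%nat -> U Csym (xs i) /\ holds V D adj U r psi (xs i))
  | BForall => forall xs : nat -> V, (forall i, (i < S k)%nat -> D (xs i)) ->
      (forall i, (i < S k)%nat -> U Msym (xs i)) ->
      far D adj r xs (S k) -> exists i, (i < S k)%nat /\ holds V D adj U r psi (xs i)
  end.

(* G[S]: unary predicates restricted to S (domain is S) *)
Definition restrictU {V} (S : V -> Prop) (U : nat -> V -> Prop) : nat -> V -> Prop :=
  fun c v => S v /\ U c v.

Definition expandU {V} (U : nat -> V -> Prop) (Csym : nat) (A : V -> Prop)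
    (Msym : nat) (B : V -> Prop) : nat -> V -> Prop :=
  fun c v => if Nat.eqb c Csym then A v else if Nat.eqb c Msym then B v else U c v.

Definition is_layering {V} (adj : V -> V -> Prop) (lam : V -> Z) : Prop :=
  forall u v, adj u v -> Z.abs (lam u - lam v) <= 1.

(* The (l,r)-cover determined by n: intervals {i,...,i+l-1}, represented by their start i,
   with i = n mod (l - 2r). *)
Definition in_cover (l r : nat) (n i : Z) : Prop :=
  exists k : Z, i = n + k * (Z.of_nat l - 2 * Z.of_nat r).

(* vertices whose layer lies in M_d(I) for I = {i,...,i+l-1}; d = 0 gives I itself *)
Definition layer_Md {V} (lam : V -> Z) (l : nat) (i : Z) (d : nat) : V -> Prop :=
  fun v => i + Z.of_nat d <= lam v <= i + Z.of_nat l - Z.of_nat d - 1.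

Definition is_plan (l r : nat) (n : Z) (p : Z -> nat) (m : nat) : Prop :=
  exists s : list Z, NoDup s /\ (forall i, In i s -> in_cover l r n i) /\
    (forall i, in_cover l r n i -> p i <> 0%nat -> In i s) /\
    fold_right (fun i acc => (p i + acc)%nat) 0%nat s = m.

(* Main.v *)
Require Import Defs.
From Stdlib Require Import ZArith List Arith Lia.
Import ListNotations.

Lemma path_layer V (adj : V->V->Prop) lam (lay: is_layering adj lam) (z : nat -> V) k :
 (forall i, (1 <= i <= k)%nat -> z (i-1)%nat = z i \/ adj (z (i-1)%nat) (z i)) ->
 forall j, (j <= k)%nat -> Z.abs (lam (z j) - lam (z 0%nat)) <= Z.of_nat j.
Proof.
  intros Hz j. induction j; intros Hj.
  - rewrite Z.sub_diag; simpl; lia.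
  - assert (IH := IHj ltac:(lia)).
    destruct (Hz (S j) ltac:(lia)) as [E|E]; replace (S j - 1)%nat with j in E by lia.
    + rewrite <- E. lia.
    + apply lay in E. lia.
Qed.

Lemma dle_layer V D adj lam (lay : is_layering adj lam) k x y :
  dle V D adj k x y -> Z.abs (lam y - lam x) <= Z.of_nat k.
Proof.
  intros [z [Hz0 [Hzk [_ Hz]]]]. subst.
  apply (path_layer V adj lam lay z k Hz k); lia.
Qed.

Lemma dle_weaken V D adj k x y : dle V D adj k x y -> dle V (fun _ => True) adj k x y.
Proof. intros [z [A [B [_ E]]]]. exists z; repeat split; auto. Qed.

Lemma dle_restrict V adj lam (lay : is_layering adj lam) l i k x y :
  i + Z.of_nat k <= lam x <= i + Z.of_nat l - Z.of_nat k - 1 ->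
  dle V (fun _ => True) adj k x y -> dle V (layer_Md lam l i 0) adj k x y.
Proof.
  intros Hx [z [A [B [_ E]]]]. exists z; split; [auto|split; [auto|split]].
  - intros j Hj. pose proof (path_layer V adj lam lay z k E j Hj). subst.
    unfold layer_Md. lia.
  - auto.
Qed.

Lemma dle_sym V D adj (adj_sym : forall u v, adj u v -> adj v u) k x y :
  dle V D adj k x y -> dle V D adj k y x.
Proof.
  intros [z [A [B [C E]]]]. exists (fun j => z (k - j)%nat). repeat split.
  - rewrite Nat.sub_0_r; auto.
  - rewrite Nat.sub_diag; auto.
  - intros j Hj. apply C; lia.
  - intros j Hj. destruct (E (k - j + 1)%nat ltac:(lia)) as [F|F];
    replace (k - j + 1 - 1)%nat with (k - j)%nat in F by lia;
    replace (k - (j - 1))%nat with (k - j + 1)%nat by lia; auto.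
Qed.

Lemma upd_in V (S : V -> Prop) rho y v : (forall q, S (rho q)) -> S v -> forall q, S (upd V rho y v q).
Proof. intros H1 H2 q. unfold upd. destruct (Nat.eqb q y); auto. Qed.

Lemma transfer V adj lam (lay : is_layering adj lam) L U Csym Msym
  (C_L : ~ In Csym L) (M_L : ~ In Msym L) A B l i r0 x :
  i + Z.of_nat r0 <= lam x <= i + Z.of_nat l - Z.of_nat r0 - 1 ->
  forall f, in_lang L f -> forall rho, (forall q, layer_Md lam l i 0 (rho q)) ->
  (leval V (layer_Md lam l i 0) adj (expandU (restrictU (layer_Md lam l i 0) U) Csym A Msym B) r0 x rho f
   <-> leval V (fun _ => True) adj U r0 x rho f).
Proof.
  intros Hx f; induction f; intros HL rho Hrho; simpl in *; try tauto.
  - unfold expandU, restrictU.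
    destruct (Nat.eqb_spec n Csym); [subst; contradiction|].
    destruct (Nat.eqb_spec n Msym); [subst; contradiction|].
    assert (layer_Md lam l i 0 (tval V x rho l0)).
    { destruct l0; simpl; auto. unfold layer_Md; lia. }
    tauto.
  - rewrite (IHf HL rho Hrho). tauto.
  - destruct HL. rewrite (IHf1 H rho Hrho), (IHf2 H0 rho Hrho). tauto.
  - destruct HL. rewrite (IHf1 H rho Hrho), (IHf2 H0 rho Hrho). tauto.
  - destruct HL. rewrite (IHf1 H rho Hrho), (IHf2 H0 rho Hrho). tauto.
  - split.
    + intros [v [Sv [Hd Hf]]]. exists v. split; [exact I|]. split.
      * eapply dle_weaken; eauto.
      * apply (IHf HL); auto. apply upd_in; auto.
    + intros [v [_ [Hd Hf]]].
      assert (Hd' := dle_restrict V adj lam lay l i r0 x v Hx Hd).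
      assert (Sv : layer_Md lam l i 0 v).
      { pose proof (dle_layer V _ adj lam lay r0 x v Hd). unfold layer_Md; lia. }
      exists v. split; auto. split; auto.
      apply (IHf HL); auto. apply upd_in; auto.
  - split.
    + intros Hall v _ Hd.
      assert (Hd' := dle_restrict V adj lam lay l i r0 x v Hx Hd).
      assert (Sv : layer_Md lam l i 0 v).
      { pose proof (dle_layer V _ adj lam lay r0 x v Hd). unfold layer_Md; lia. }
      apply (IHf HL); [apply upd_in; auto|]. apply Hall; auto.
    + intros Hall v Sv Hd.
      apply (IHf HL); [apply upd_in; auto|]. apply Hall; auto. eapply dle_weaken; eauto.
Qed.

Definition Nsum (p : Z -> nat) (s : list Z) : nat := fold_right (fun i acc => (p i + acc)%nat) 0%nat s.

Lemma pigeon (c : nat -> Z) (p : Z -> nat) : forall s ks, NoDup ks ->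
  (forall k, In k ks -> In (c k) s \/ p (c k) = 0%nat) -> (Nsum p s < length ks)%nat ->
  exists k0 ks', In k0 ks' /\ NoDup ks' /\ incl ks' ks /\ (forall k, In k ks' -> c k = c k0)
     /\ (p (c k0) < length ks')%nat.
Proof.
  induction s as [|a s IH]; intros ks Hks Hin Hlen.
  - destruct ks as [|k t]; simpl in Hlen; [lia|].
    destruct (Hin k (or_introl eq_refl)) as [[]|E].
    exists k, [k]. repeat split.
    + left; auto.
    + constructor; [intros []|constructor].
    + intros y [<-|[]]; left; auto.
    + intros y [<-|[]]; auto.
    + rewrite E; simpl; lia.
  - set (P := fun k => Z.eqb (c k) a).
    pose proof (filter_length P ks) as FL.
    simpl in Hlen.
    destruct (le_lt_dec (length (filter P ks)) (p a)) as [Hle|Hlt].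
    + destruct (IH (filter (fun x => negb (P x)) ks)) as [k0 [ks' [H1 [H2 [H3 [H4 H5]]]]]].
      * apply NoDup_filter; auto.
      * intros k Hk. apply filter_In in Hk as [Hk Hn].
        unfold P in Hn. destruct (Z.eqb_spec (c k) a); [discriminate|].
        destruct (Hin k Hk) as [[E|E]|E]; auto; congruence.
      * lia.
      * exists k0, ks'. repeat split; auto.
        intros y Hy. apply H3 in Hy. apply filter_In in Hy; tauto.
    + assert (HN : NoDup (filter P ks)) by (apply NoDup_filter; auto).
      assert (Hinc : forall y, In y (filter P ks) -> c y = a).
      { intros y Hy. apply filter_In in Hy as [_ Hy]. apply Z.eqb_eq; auto. }
      assert (Hinc2 : incl (filter P ks) ks).
      { intros y Hy. apply filter_In in Hy; tauto. }
      destruct (filter P ks) as [|k0 t] eqn:E; simpl in Hlt; [lia|].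
      exists k0, (k0 :: t). repeat split; auto.
      * left; auto.
      * intros k Hk. rewrite (Hinc k Hk), (Hinc k0 (or_introl eq_refl)); auto.
      * rewrite (Hinc k0 (or_introl eq_refl)). simpl; lia.
Qed.

Lemma gap l r n a b x y : (4 * r < l)%nat -> in_cover l r n a -> in_cover l r n b -> a <> b ->
  a + Z.of_nat (2*r) <= x <= a + Z.of_nat l - Z.of_nat (2*r) - 1 ->
  b + Z.of_nat (2*r) <= y <= b + Z.of_nat l - Z.of_nat (2*r) - 1 ->
  Z.of_nat (2*r) < Z.abs (x - y).
Proof.
  intros Hl [ka Ea] [kb Eb] Hab Hx Hy.
  set (w := Z.of_nat l - 2 * Z.of_nat r) in *.
  assert (Hw : w = Z.of_nat l - 2 * Z.of_nat r) by reflexivity.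
  assert (ka <> kb) by (intro; subst; congruence).
  destruct (Z.lt_total ka kb) as [h|[h|h]]; [|congruence|].
  - assert ((kb - ka) * w >= w) by nia. lia.
  - assert ((ka - kb) * w >= w) by nia. lia.
Qed.

Theorem mainTheorem13
  (V : Type) (adj : V -> V -> Prop)
  (adj_sym : forall u v, adj u v -> adj v u) (adj_irr : forall v, ~ adj v v)
  (V_fin : exists vs : list V, forall v, In v vs)
  (L : list nat) (U : nat -> V -> Prop)
  (phi : basic) (phi_closed : lclosed (core phi)) (phi_L : in_lang L (core phi))
  (Csym Msym : nat) (CM : Csym <> Msym) (C_L : ~ In Csym L) (M_L : ~ In Msym L)
  (lam : V -> Z) (lam_lay : is_layering adj lam)
  (r l : nat) (Hr : (range phi <= r)%nat) (Hl : (4 * r < l)%nat)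
  (n : Z) (p : Z -> nat) (Hp : is_plan l r n p (spread phi))
  (H : forall i : Z, in_cover l r n i ->
     sat_variant (layer_Md lam l i 0) adj
       (expandU (restrictU (layer_Md lam l i 0) U)
          Csym (layer_Md lam l i (2 * r)) Msym (layer_Md lam l i r))
       Csym Msym (p i) phi) :
  sat_basic (fun _ => True) adj U phi.
Proof.
  destruct Hp as [s [Hnd [Hcov [Hsupp Hsum]]]].
  fold (Nsum p s) in Hsum.
  unfold sat_basic.
  set (r0 := range phi) in *. set (psi := core phi) in *. set (m := spread phi) in *.
  assert (ExC : forall I v, expandU (restrictU (layer_Md lam l I 0) U) Csym
        (layer_Md lam l I (2 * r)) Msym (layer_Md lam l I r) Csym v = layer_Md lam l I (2*r) v).
  { intros I v. unfold expandU. rewrite Nat.eqb_refl. auto. }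
  assert (ExM : forall I v, expandU (restrictU (layer_Md lam l I 0) U) Csym
        (layer_Md lam l I (2 * r)) Msym (layer_Md lam l I r) Msym v = layer_Md lam l I r v).
  { intros I v. unfold expandU. destruct (Nat.eqb_spec Msym Csym); [congruence|].
    rewrite Nat.eqb_refl. auto. }
  assert (Htr : forall I x, layer_Md lam l I r x ->
     holds V (layer_Md lam l I 0) adj (expandU (restrictU (layer_Md lam l I 0) U)
          Csym (layer_Md lam l I (2 * r)) Msym (layer_Md lam l I r)) r0 psi x <->
     holds V (fun _ => True) adj U r0 psi x).
  { intros I x Hx. unfold holds. apply (transfer V adj lam lam_lay L U Csym Msym C_L M_L); auto.
    - unfold layer_Md in Hx. lia.
    - intros _. unfold layer_Md in *. lia. }
  destruct (bk phi) eqn:Ebk.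
  -
    assert (Hv : exists v : V, True).
    { assert (Hn : in_cover l r n n) by (exists 0; lia).
      specialize (H n Hn). unfold sat_variant in H. rewrite Ebk in H.
      destruct H as [xs _]. exists (xs 0%nat); auto. }
    destruct Hv as [v0 _].
    assert (Main : forall s, NoDup s -> (forall I, In I s -> in_cover l r n I) ->
      exists xs : nat -> V,
        (forall k, (k < Nsum p s)%nat -> exists I, In I s /\ layer_Md lam l I (2*r) (xs k)) /\
        far (fun _ => True) adj r0 xs (Nsum p s) /\
        (forall k, (k < Nsum p s)%nat -> holds V (fun _ => True) adj U r0 psi (xs k))).
    { clear Hnd Hcov Hsupp Hsum s.
      induction s as [|a s IH]; intros Hnd Hcov.
      - exists (fun _ => v0). simpl. split; [intros; lia|split].
        + intros i j h. lia.
        + intros; lia.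
      - apply NoDup_cons_iff in Hnd as [Hna Hnd].
        destruct (IH Hnd (fun I HI => Hcov I (or_intror HI))) as [xs [X1 [X2 X3]]].
        assert (Ha := Hcov a (or_introl eq_refl)).
        specialize (H a Ha). unfold sat_variant in H. rewrite Ebk in H. cbv zeta in H.
        change (range phi) with r0 in H. change (core phi) with psi in H.
        destruct H as [ys [Y1 [Y2 Y3]]].
        exists (fun k => if (k <? p a)%nat then ys k else xs (k - p a)%nat).
        change (Nsum p (a::s)) with (p a + Nsum p s)%nat.
        split; [|split].
        + intros k Hk. destruct (Nat.ltb_spec k (p a)).
          * exists a. split; [left; auto|]. rewrite <- ExC. apply Y3; auto.
          * destruct (X1 (k - p a)%nat ltac:(lia)) as [I [HI HI2]].
            exists I; split; [right; auto|auto].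
        + intros k1 k2 Hk Hd. destruct (Nat.ltb_spec k1 (p a)); destruct (Nat.ltb_spec k2 (p a)).
          * apply (Y2 k1 k2 ltac:(lia)).
            destruct (Y3 k1 ltac:(lia)) as [Hy _]. rewrite ExC in Hy.
            apply (dle_restrict V adj lam lam_lay l a); auto.
            unfold layer_Md in Hy. lia.
          * destruct (Y3 k1 ltac:(lia)) as [Hy _]. rewrite ExC in Hy.
            destruct (X1 (k2 - p a)%nat ltac:(lia)) as [I [HI HI2]].
            assert (a <> I) by (intro; subst; contradiction).
            pose proof (gap l r n a I _ _ Hl Ha (Hcov I (or_intror HI)) H1 Hy HI2).
            pose proof (dle_layer V _ adj lam lam_lay _ _ _ Hd). lia.
          * lia.
          * apply (X2 (k1 - p a)%nat (k2 - p a)%nat ltac:(lia)); auto.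
        + intros k Hk. destruct (Nat.ltb_spec k (p a)).
          * destruct (Y3 k ltac:(lia)) as [Hy Hh]. rewrite ExC in Hy.
            apply (proj1 (Htr a (ys k) ltac:(unfold layer_Md in *; lia))). exact Hh.
          * apply X3; lia. }
    destruct (Main s Hnd Hcov) as [xs [X1 [X2 X3]]]. rewrite Hsum in *.
    exists xs. split; [auto|split; auto].
  - intros xs _ Hfar.
    set (w := Z.of_nat l - 2 * Z.of_nat r).
    assert (Hwd : w = Z.of_nat l - 2 * Z.of_nat r) by reflexivity.
    assert (Hw : 0 < w) by lia.
    set (c := fun k => n + ((lam (xs k) - n - Z.of_nat r) / w) * w).
    assert (Hc1 : forall k, in_cover l r n (c k)).
    { intros k. exists ((lam (xs k) - n - Z.of_nat r)/w). reflexivity. }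
    assert (Hc2 : forall k, layer_Md lam l (c k) r (xs k)).
    { intros k. unfold layer_Md, c.
      pose proof (Z.div_mod (lam (xs k) - n - Z.of_nat r) w ltac:(lia)).
      pose proof (Z.mod_pos_bound (lam (xs k) - n - Z.of_nat r) w Hw).
      set (q := (lam (xs k) - n - Z.of_nat r) / w) in *.
      set (rm := (lam (xs k) - n - Z.of_nat r) mod w) in *.
      rewrite (Z.mul_comm q w). lia. }
    destruct (pigeon c p s (seq 0 (S m)) (seq_NoDup _ _)) as [k0 [ks' [K1 [K2 [K3 [K4 K5]]]]]].
    + intros k _. destruct (Nat.eq_dec (p (c k)) 0); [right; auto| left; apply Hsupp; auto].
    + rewrite length_seq, Hsum. lia.
    + set (I := c k0) in *. specialize (H I (Hc1 k0)).
      unfold sat_variant in H; rewrite Ebk in H; cbv zeta in H.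
      change (range phi) with r0 in H. change (core phi) with psi in H.
      assert (Hks : forall j, (j < S (p I))%nat -> In (nth j ks' 0%nat) ks')
        by (intros; apply nth_In; lia).
      assert (HkI : forall j, (j < S (p I))%nat -> layer_Md lam l I r (xs (nth j ks' 0%nat))).
      { intros j Hj. rewrite <- (K4 _ (Hks j Hj)). apply Hc2. }
      destruct (H (fun j => xs (nth j ks' 0%nat))) as [j [Hj Hh]].
      * intros j Hj. specialize (HkI j Hj). unfold layer_Md in *. lia.
      * intros j Hj. rewrite ExM. auto.
      * intros j1 j2 Hj12 Hd. apply dle_weaken in Hd.
        assert (Hne : nth j1 ks' 0%nat <> nth j2 ks' 0%nat).
        { intro E. apply (proj1 (NoDup_nth ks' 0%nat) K2) in E; lia. }
        assert (B1 := K3 _ (Hks j1 ltac:(lia))). assert (B2 := K3 _ (Hks j2 ltac:(lia))).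
        apply in_seq in B1, B2.
        destruct (Nat.lt_total (nth j1 ks' 0%nat) (nth j2 ks' 0%nat)) as [h|[h|h]].
        -- apply (Hfar (nth j1 ks' 0%nat) (nth j2 ks' 0%nat) ltac:(lia) Hd).
        -- contradiction.
        -- apply (Hfar (nth j2 ks' 0%nat) (nth j1 ks' 0%nat) ltac:(lia)). apply dle_sym; auto.
      * exists (nth j ks' 0%nat). split.
        -- assert (B := K3 _ (Hks j Hj)). apply in_seq in B. lia.
        -- apply (proj1 (Htr I _ (HkI j Hj))). exact Hh.
Qed.
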